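(* Let $\alpha,\beta,\gamma\in\mathbb{R}$, $s_1,s_2\in S_X$, $p_0\in[0,1]$ and $\phi>0$, and write $f_i(y):=\alpha u_X(s_i,y)+\beta u_Y(s_i,y)+\gamma$. Suppose that for every $y\in S_Y$, $$-\frac{1-(1-\lambda)p_0}{\phi}\le f_1(y)\le-\frac{(1-\lambda)(1-p_0)}{\phi},\qquad \frac{(1-\lambda)p_0}{\phi}\le f_2(y)\le\frac{\lambda+(1-\lambda)p_0}{\phi}.$$ Define $p(s_1,y):=\frac{1}{\lambda}\big(\phi f_1(y)-(1-\lambda)p_0+1\big)$ and $p(s_2,y):=\frac{1}{\lambda}\big(\phi f_2(y)-(1-\lambda)p_0\big)$ (these lie in $[0,1]$), and let player $X$ use the memory-one strategy with initial action $\sigma_X^0=p_0\delta_{s_1}+(1-p_0)\delta_{s_2}$ and $\sigma_X[x,y]=p(x,y)\delta_{s_1}+(1-p(x,y))\delta_{s_2}$ for $x\in\{s_1,s_2\}$, $y\in S_Y$ (so $X$ only ever plays $s_1$ or $s_2$). Then for every behavioral strategy of $Y$, $\alpha\pi_X+\beta\pi_Y+\gamma=0$.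
   Context: Standing framework. Let $S_X,S_Y$ be measurable spaces (action spaces of players $X$ and $Y$), $u_X,u_Y:S_X\times S_Y\to\mathbb{R}$ bounded measurable payoff functions, and $\lambda\in(0,1)$ a discount factor. Histories: $\mathcal{H}^T=(S_X\times S_Y)^T$, $\mathcal{H}^0=\{\varnothing\}$, $\mathcal{H}=\bigsqcup_T\mathcal{H}^T$. A behavioral strategy for a player is a Markov kernel from $\mathcal{H}$ to that player's action space. A memory-one strategy for $X$ is given by an initial probability measure $\sigma_X^0$ on $S_X$ and a Markov kernel $(x,y)\mapsto\sigma_X[x,y]$ from $S_X\times S_Y$ to $S_X$, applied to the last action pair. Given strategies, let $\mu_0=\sigma_X[\varnothing]\otimes\sigma_Y[\varnothing]$ and $\mu_t(E'\times E)=\int_{E'}(\sigma_X[h]\otimes\sigma_Y[h])(E)\,d\mu_{t-1}(h)$ on $\mathcal{H}^{t+1}$; let $\nu_t(E)=\mu_t(\mathcal{H}^t\times E)$. Expected payoffs: $\pi_X=(1-\lambda)\sum_{t\ge0}\lambda^t\int u_X\,d\nu_t$, $\pi_Y=(1-\lambda)\sum_{t\ge0}\lambda^t\int u_Y\,d\nu_t$. $\delta_s$ denotes the Dirac measure at $s$. *)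

(* Defs.v *)
From HB Require Import structures.
From mathcomp Require Import all_boot all_order all_algebra.
From mathcomp Require Import all_classical all_reals all_analysis.
Set Implicit Arguments.
Unset Strict Implicit.
Unset Printing Implicit Defensive.
Import Order.TTheory GRing.Theory Num.Theory.
Import numFieldNormedType.Exports.

Local Open Scope classical_set_scope.
Local Open Scope ring_scope.

(* Histories of positive length: [hist SX SY t] is H^{t+1} = (S_X x S_Y)^{t+1},
   encoded as left-nested pairs ((..(z_0, z_1), ..), z_t) with the product
   sigma-algebra. H^0 = {empty} is handled separately (initial measures). *)
Fixpoint hist_disp (d1 d2 : measure_display) (t : nat) : measure_display :=
  match t with
  | 0 => measure_prod_display (d1, d2)
  | n.+1 => measure_prod_display (hist_disp d1 d2 n, measure_prod_display (d1, d2))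
  end.

Fixpoint hist d1 d2 (SX : measurableType d1) (SY : measurableType d2) (t : nat)
  : measurableType (hist_disp d1 d2 t) :=
  match t return measurableType (hist_disp d1 d2 t) with
  | 0 => (SX * SY)%type
  | n.+1 => (hist SX SY n * (SX * SY))%type
  end.

Definition hlast d1 d2 (SX : measurableType d1) (SY : measurableType d2) (t : nat)
  : hist SX SY t -> (SX * SY)%type :=
  match t return hist SX SY t -> (SX * SY)%type with
  | 0 => fun h => h
  | n.+1 => fun h => h.2
  end.

(* nu_t(E) = mu_t(H^t x E) *)
Definition nu_of d1 d2 (SX : measurableType d1) (SY : measurableType d2)
  (R : realType) (t : nat) (mu_t : set (hist SX SY t) -> \bar R)
  : set (SX * SY)%type -> \bar R :=
  pushforward mu_t (@hlast d1 d2 SX SY t).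

Definition payoff d1 d2 (SX : measurableType d1) (SY : measurableType d2)
  (R : realType) (lambda : R)
  (mu : forall t : nat, set (hist SX SY t) -> \bar R)
  (u : (SX * SY)%type -> R) : R :=
  (1 - lambda) *
  limn (series ((fun t : nat =>
     lambda ^+ t * fine (\int[nu_of (mu t)]_z (u z)%:E)%E) : R^nat)).

(* Main.v *)
Require Import Defs.
From HB Require Import structures.
From mathcomp Require Import all_boot all_order all_algebra.
From mathcomp Require Import all_classical all_reals all_analysis.
From mathcomp Require Import measurable_realfun ring lra.
Import Order.TTheory GRing.Theory Num.Theory.
Import numFieldNormedType.Exports.
Local Open Scope classical_set_scope.
Local Open Scope ring_scope.

Section Conc.
Local Open Scope ereal_scope.
Context d1 d2 (SX : measurableType d1) (SY : measurableType d2) (R : realType)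
  d (T : measurableType d) (m : {measure set T -> \bar R})
  (L : T -> (SX * SY)%type) (mL : measurable_fun setT L)
  (mfin : m setT < +oo) (s1 s2 : SX) (A : set SX) (mA : measurable A)
  (As1 : A s1) (As2 : ~ A s2).
Hypothesis Q : forall B, measurable B -> ~ B s1 -> ~ B s2 ->
  m (L @^-1` (B `*` setT)) = 0.

Let r (z : (SX * SY)%type) : (SX * SY)%type :=
  (if z.1 \in A then s1 else s2, z.2).

Let mr1 : measurable_fun setT (fun x : SX => if x \in A then s1 else s2).
Proof.
move=> _ B mB; rewrite setTI.
have [Bs1|Bs1] := pselect (B s1); have [Bs2|Bs2] := pselect (B s2).
- suff -> : (fun x : SX => if x \in A then s1 else s2) @^-1` B = setT by [].
  by apply/seteqP; split => x //= _; case: ifP.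
- suff -> : (fun x : SX => if x \in A then s1 else s2) @^-1` B = A by [].
  apply/seteqP; split => x /=.
    by case: ifPn => [/set_mem //|_ /Bs2].
  by move=> Ax; rewrite mem_set.
- suff -> : (fun x : SX => if x \in A then s1 else s2) @^-1` B = ~` A.
    exact: measurableC.
  apply/seteqP; split => x /=.
    by case: ifPn => [_ /Bs1 //|/negP nA _ Ax]; apply: nA; rewrite in_setE.
  by move=> Ax; rewrite ifF //; apply/negbTE/negP; rewrite in_setE.
- suff -> : (fun x : SX => if x \in A then s1 else s2) @^-1` B = set0 by [].
  by apply/seteqP; split => x //=; case: ifP.
Qed.

Let mr : measurable_fun setT r.
Proof.
apply: measurable_fun_pair.
  exact: (measurableT_comp mr1 measurable_fst).
exact: measurable_snd.
Qed.

Let mrL : measurable_fun setT (r \o L).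
Proof. exact: measurableT_comp mr mL. Qed.

Let nu1 := pushforward m L.
Let nu2 := pushforward m (r \o L).

Let null_sub (U V W : set T) : measurable U -> measurable V -> measurable W ->
  U `\` V `<=` W -> m W = 0 -> m U <= m V.
Proof.
move=> mU mV mW UVW W0.
apply: (@le_trans _ _ (m (V `|` W))).
  apply: le_measure; rewrite ?inE //; [exact: measurableU|].
  by move=> x Ux; have [Vx|Vx] := pselect (V x); [left|right; apply: UVW].
by apply: (le_trans (measureU2 m mV mW)); rewrite (_ : _ W = 0) ?adde0.
Qed.

Lemma conc_rect B C : measurable B -> measurable C ->
  nu1 (B `*` C) = nu2 (B `*` C).
Proof.
move=> mB mC; rewrite /nu1 /nu2 /pushforward.
set B' := [set x | (A x /\ B s1) \/ (~ A x /\ B s2)].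
have -> : (r \o L) @^-1` (B `*` C) = L @^-1` (B' `*` C).
  apply/seteqP; split => h /=; rewrite /B' /=.
    case: ifPn => [/set_mem Ah|/negP Ah] [Bh Ch]; split => //.
      by left.
    by right; split => // Ah'; apply: Ah; rewrite in_setE.
  case=> -[[Ah Bs]|[Ah Bs]] Ch; split => //.
    by rewrite mem_set.
  by rewrite ifF //; apply/negbTE/negP; rewrite in_setE.
have mB' : measurable B'.
  have -> : B' = (A `&` [set _ | B s1]) `|` (~` A `&` [set _ | B s2]).
    by apply/seteqP; split => x [] [] ? ?; [left|right|left|right].
  have mcst (P : Prop) : measurable [set _ : SX | P].
    have [p|p] := pselect P.
      by have -> : [set _ : SX | P] = setT by apply/seteqP; split.
    by have -> : [set _ : SX | P] = set0 by apply/seteqP; split.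
  by apply: measurableU; apply: measurableI => //; exact: measurableC.
have mp X : measurable X -> measurable (L @^-1` X).
  by move=> mX; rewrite -[_ @^-1` _]setTI; apply: mL.
apply/eqP; rewrite eq_le; apply/andP; split.
- apply: (@null_sub _ _ (L @^-1` ((B `\` B') `*` setT))).
  + by apply: mp; apply: measurableX.
  + by apply: mp; apply: measurableX.
  + by apply: mp; apply: measurableX => //; apply: measurableD.
  + by move=> h [[Bh Ch] nB]; split => //; split => //; apply: contra_not nB => ?; split.
  + apply: Q; first by apply: measurableD.
    * by move=> [Bs nB]; apply: nB; left.
    * by move=> [Bs nB]; apply: nB; right.
- apply: (@null_sub _ _ (L @^-1` ((B' `\` B) `*` setT))).
  + by apply: mp; apply: measurableX.
  + by apply: mp; apply: measurableX.
  + by apply: mp; apply: measurableX => //; apply: measurableD.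
  + by move=> h [[Bh Ch] nB]; split => //; split => //; apply: contra_not nB => ?; split.
  + apply: Q; first by apply: measurableD.
    * by move=> [[[_ ?]|[? _]] nB].
    * by move=> [[[? _]|[_ ?]] nB].
Qed.

Lemma conc N : measurable N -> (forall y, ~ N (s1, y) /\ ~ N (s2, y)) ->
  m (L @^-1` N) = 0.
Proof.
move=> mN Nn.
pose G : set (set (SX * SY)) :=
  [set X | exists B, measurable B /\ exists C, measurable C /\ X = B `*` C].
have -> : m (L @^-1` N) = nu1 N by [].
have -> : nu1 N = nu2 N.
  apply: (measure_unique G (fun=> setT)).
  - rewrite measurable_prod_measurableType //; congr (<<s _ >>).
    rewrite predeqE => X; split => [[B mB [C mC <-]]|[B [mB [C [mC ->]]]]].
      by exists B; split => //; exists C.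
    by exists B => //; exists C.
  - move=> /= _ _ [X1 [mX1 [X2 [mX2 ->]]]] [Y1 [mY1 [Y2 [mY2 ->]]]].
    rewrite -setXI; exists (X1 `&` Y1); split; first exact: measurableI.
    by exists (X2 `&` Y2); split => //; exact: measurableI.
  - by move=> _; exists setT; split => //; exists setT; split => //; rewrite setXTT.
  - by rewrite bigcup_const.
  - by move=> _ [B [mB [C [mC ->]]]]; exact: conc_rect.
  - by move=> _; exact: mfin.
  - exact: mN.
rewrite /nu2 /pushforward.
have -> : (r \o L) @^-1` N = set0; last exact: measure0.
apply/seteqP; split => h //= Nh.
have [n1 n2] := Nn (L h).2; move: Nh; rewrite /= /r /=; by case: ifP.
Qed.

End Conc.
Lemma bnd_int d (T : measurableType d) (R : realType)
  (m : {measure set T -> \bar R}) (f : T -> R) (M : R) :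
  (m setT < +oo)%E -> measurable_fun setT f -> (forall x, `|f x| <= M) ->
  m.-integrable setT (EFin \o f).
Proof.
move=> mfin mf fM; apply: measurable_bounded_integrable => //.
exists M; split; first by rewrite num_real.
move=> K MK x _ /=; apply: (le_trans (fM x)); exact: ltW.
Qed.
Lemma ae0_int d (T : measurableType d) (R : realType)
  (m : {measure set T -> \bar R}) (f : T -> \bar R) (N : set T) :
  measurable N -> m N = 0%E -> measurable_fun setT f ->
  (forall x, ~ N x -> f x = 0%E) -> (\int[m]_(x in setT) f x = 0)%E.
Proof.
move=> mN N0 mf f0.
rewrite (ae_eq_integral (cst 0%E)) //; first by rewrite integral0.
exists N; split => // x /= H; apply: contrapT => Nx; apply: H => _; exact: f0.
Qed.

Lemma prodXT d1 d2 (T1 : measurableType d1) (T2 : measurableType d2)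
  (R : realType) (m1 : {measure set T1 -> \bar R})
  (m2 : {measure set T2 -> \bar R}) (B : set T1) :
  measurable B -> m2 setT = 1%E -> (m1 \x m2)%E (B `*` setT) = m1 B.
Proof.
move=> mB m21; rewrite /product_measure1.
rewrite (eq_integral (fun x => (\1_B x)%:E)); last first.
  move=> x _ /=; rewrite indicE; have [xB|xB] := boolP (x \in B).
    by rewrite in_xsectionX.
  by rewrite notin_xsectionX // measure0.
by rewrite integral_indic // setIT.
Qed.

Lemma mnzE d (T : measurableType d) (R : realType) (f : T -> \bar R) :
  measurable_fun setT f -> measurable [set x | f x != 0%E].
Proof.
move=> mf.
have -> : [set x | f x != 0%E] = setT `&` f @^-1` (~` [set 0%E]).
  by apply/seteqP; split => x /=; [move=> /eqP ?; split|case=> _ /eqP].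
by apply: mf => //; exact: measurableC.
Qed.

Lemma mnzR d (T : measurableType d) (R : realType) (f : T -> R) :
  measurable_fun setT f -> measurable [set x | f x != 0].
Proof.
move=> mf.
have -> : [set x | f x != 0] = setT `&` f @^-1` (~` [set 0]).
  by apply/seteqP; split => x /=; [move=> /eqP ?; split|case=> _ /eqP].
by apply: mf => //; exact: measurableC.
Qed.

Definition bnd (T : Type) (R : realType) (f : T -> R) :=
  exists M : R, forall x, `|f x| <= M.
Arguments bnd {T R}.

Lemma bndD (T : Type) (R : realType) (f g : T -> R) :
  bnd f -> bnd g -> bnd (fun x => f x + g x).
Proof.
move=> [M fM] [N gN]; exists (M + N) => x.
by apply: (le_trans (ler_normD _ _)); apply: lerD.
Qed.

Lemma bndB (T : Type) (R : realType) (f g : T -> R) :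
  bnd f -> bnd g -> bnd (fun x => f x - g x).
Proof.
move=> [M fM] [N gN]; exists (M + N) => x.
by apply: (le_trans (ler_normB _ _)); apply: lerD.
Qed.

Lemma bndZ (T : Type) (R : realType) (r : R) (f : T -> R) :
  bnd f -> bnd (fun x => r * f x).
Proof.
move=> [M fM]; exists (`|r| * M) => x.
by rewrite normrM; apply: ler_wpM2l.
Qed.

Lemma bndc (T : Type) (R : realType) (r : R) : bnd (fun _ : T => r).
Proof. by exists `|r|. Qed.

Lemma bndcomp (T U : Type) (R : realType) (f : U -> R) (g : T -> U) :
  bnd f -> bnd (fun x => f (g x)).
Proof. by move=> [M fM]; exists M. Qed.

Lemma bint d (T : measurableType d) (R : realType)
  (m : {measure set T -> \bar R}) (f : T -> R) :
  (m setT < +oo)%E -> measurable_fun setT f -> bnd f ->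
  m.-integrable setT (EFin \o f).
Proof. by move=> mfin mf [M fM]; exact: (@bnd_int _ _ _ m f M mfin mf fM). Qed.
Theorem corollary1
  (d1 d2 : measure_display) (SX : measurableType d1) (SY : measurableType d2)
  (R : realType)
  (uX uY : (SX * SY)%type -> R)
  (muX : measurable_fun [set: (SX * SY)%type] uX)
  (muY : measurable_fun [set: (SX * SY)%type] uY)
  (buX : exists M : R, forall z, `|uX z| <= M)
  (buY : exists M : R, forall z, `|uY z| <= M)
  (lambda : R) (hl0 : 0 < lambda) (hl1 : lambda < 1)
  (alpha beta gamma : R) (s1 s2 : SX) (p0 phi : R)
  (hp00 : 0 <= p0) (hp01 : p0 <= 1) (hphi : 0 < phi)
  (f1 := fun y : SY => alpha * uX (s1, y) + beta * uY (s1, y) + gamma)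
  (f2 := fun y : SY => alpha * uX (s2, y) + beta * uY (s2, y) + gamma)
  (hf1 : forall y : SY,
      - ((1 - (1 - lambda) * p0) / phi) <= f1 y /\
      f1 y <= - ((1 - lambda) * (1 - p0) / phi))
  (hf2 : forall y : SY,
      (1 - lambda) * p0 / phi <= f2 y /\
      f2 y <= (lambda + (1 - lambda) * p0) / phi)
  (p1 := fun y : SY => lambda^-1 * (phi * f1 y - (1 - lambda) * p0 + 1))
  (p2 := fun y : SY => lambda^-1 * (phi * f2 y - (1 - lambda) * p0))
  (* player X: memory-one strategy *)
  (sigX0 : probability SX R)
  (hsigX0 : forall A, measurable A ->
      sigX0 A = (p0%:E * \d_s1 A + (1 - p0)%:E * \d_s2 A)%E)
  (sigX : R.-pker (SX * SY)%type ~> SX)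
  (hsigX1 : forall (y : SY) A, measurable A ->
      sigX (s1, y) A = ((p1 y)%:E * \d_s1 A + (1 - p1 y)%:E * \d_s2 A)%E)
  (hsigX2 : forall (y : SY) A, measurable A ->
      sigX (s2, y) A = ((p2 y)%:E * \d_s1 A + (1 - p2 y)%:E * \d_s2 A)%E)
  (* player Y: arbitrary behavioral strategy (kernel on H^0 and on each H^{t+1}) *)
  (sigY0 : probability SY R)
  (sigY : forall t : nat, R.-pker (hist SX SY t) ~> SY)
  (* the induced measures mu_t on H^{t+1} *)
  (mu : forall t : nat, probability (hist SX SY t) R)
  (hmu0 : forall E : set (SX * SY)%type, measurable E ->
      mu 0%N E = (sigX0 \x sigY0)%E E)
  (hmuS : forall (t : nat) (E' : set (hist SX SY t)) (E : set (SX * SY)%type),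
      measurable E' -> measurable E ->
      mu t.+1 (E' `*` E) =
      (\int[mu t]_(h in E') (sigX (hlast h) \x sigY t h) E)%E) :
  alpha * payoff lambda (fun t => mu t) uX
  + beta * payoff lambda (fun t => mu t) uY + gamma = 0.
Proof.
pose L t := @hlast _ _ SX SY t.
have mL t : measurable_fun setT (L t).
  by case: t => [|t]; [exact: measurable_id|exact: measurable_snd].
pose y0 : SY := point.
pose F z := alpha * uX z + beta * uY z + gamma.
have mF : measurable_fun setT F.
  apply: measurable_funD => //; apply: measurable_funD => //;
    exact: measurable_funM.
have f12 : f1 y0 < f2 y0.
  have [_ h1] := hf1 y0; have [h2 _] := hf2 y0.
  have k0 : 0 < (1 - lambda) / phi by rewrite divr_gt0 // subr_gt0.
  have e : (1 - lambda) * p0 / phi + (1 - lambda) * (1 - p0) / phi = (1 - lambda) / phi.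
    by rewrite -mulrDl; congr (_ / _); ring.
  lra.
pose c := (f1 y0 + f2 y0) / 2.
pose A := (fun x => F (x, y0)) @^-1` `]-oo, c[.
have mA : measurable A.
  rewrite /A -[X in measurable X]setTI.
  by apply: (measurable_fun_pair1 y0 mF) => //; exact: measurable_itv.
have As1 : A s1 by rewrite /A /= in_itv /= (_ : F (s1, y0) = f1 y0) // /c; lra.
have As2 : ~ A s2 by rewrite /A /= in_itv /= (_ : F (s2, y0) = f2 y0) // /c; lra.
have mfin t : (mu t setT < +oo)%E by rewrite probability_setT ltry.
have kX1 y B : measurable B ->
    sigX (s1, y) B = (p1 y * (s1 \in B)%:R + (1 - p1 y) * (s2 \in B)%:R)%:E.
  by move=> mB; rewrite hsigX1 // !diracE -!EFinM -EFinD.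
have kX2 y B : measurable B ->
    sigX (s2, y) B = (p2 y * (s1 \in B)%:R + (1 - p2 y) * (s2 \in B)%:R)%:E.
  by move=> mB; rewrite hsigX2 // !diracE -!EFinM -EFinD.
have Q t : forall B, measurable B -> ~ B s1 -> ~ B s2 ->
    mu t (L t @^-1` (B `*` setT)) = 0%E.
  elim: t => [|t IH] B mB nB1 nB2.
    change (mu 0%N (B `*` setT) = 0%E).
    rewrite hmu0; last exact: measurableX.
    have -> : (sigX0 \x sigY0)%E (B `*` setT) = (sigX0 B * sigY0 setT)%E.
      exact: product_measure1E.
    rewrite hsigX0 // !diracE (memNset nB1) (memNset nB2).
    by rewrite /= !mule0 adde0 mul0e.
  have -> : L t.+1 @^-1` (B `*` setT) = setT `*` (B `*` setT).
    by apply/seteqP; split => -[h z] /=; [move=> ?; split|case].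
  rewrite hmuS //; last exact: measurableX.
  rewrite (eq_integral (fun h => sigX (L t h) B)); last first.
    by move=> h _; rewrite prodXT // prob_kernel.
  apply: (@ae0_int _ _ _ _ _ (L t @^-1` [set z | sigX z B != 0%E])).
  - rewrite -[X in measurable X]setTI; apply: (mL t) => //.
    exact: mnzE (measurable_kernel sigX B mB).
  - have := @conc _ _ _ _ _ _ _ (mu t) (L t) (mL t) (mfin t) _ _ _ mA As1 As2 IH; apply.
      exact: mnzE (measurable_kernel sigX B mB).
    move=> y /=; rewrite kX1 // kX2 // (memNset nB1) (memNset nB2) /=.
    by rewrite !mulr0 addr0 eqxx.
  - exact: measurableT_comp (measurable_kernel sigX B mB) (mL t).
  - by move=> h /= /negP; rewrite negbK => /eqP.
have cz t N : measurable N -> (forall y, ~ N (s1, y) /\ ~ N (s2, y)) ->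
    mu t (L t @^-1` N) = 0%E.
  exact: (@conc _ _ _ _ _ _ _ (mu t) (L t) (mL t) (mfin t) _ _ _ mA As1 As2 (Q t)).
pose P z := fine (sigX z A).
have PE z : sigX z A = (P z)%:E.
  rewrite /P fineK // ge0_fin_numE //.
  apply: (le_lt_trans _ (ltry 1)); rewrite -(@prob_kernel _ _ _ _ _ sigX z).
  by apply: le_measure; rewrite ?inE.
have P01 z : 0 <= P z <= 1.
  rewrite -!lee_fin -PE measure_ge0 /= -(@prob_kernel _ _ _ _ _ sigX z).
  by apply: le_measure; rewrite ?inE.
have mP : measurable_fun setT P.
  apply/measurable_EFinP.
  rewrite (_ : EFin \o P = fun z => sigX z A); first exact: measurable_kernel.
  by apply/funext => z; rewrite /= PE.
have Ps1 y : P (s1, y) = p1 y.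
  by rewrite /P kX1 // (mem_set As1) (memNset As2) /= mulr1 mulr0 addr0.
have Ps2 y : P (s2, y) = p2 y.
  by rewrite /P kX2 // (mem_set As1) (memNset As2) /= mulr1 mulr0 addr0.
pose G z := phi * F z - lambda * P z + \1_A z.1 - (1 - lambda) * p0.
have mI : measurable_fun setT (fun z : (SX * SY)%type => \1_A z.1 : R).
  exact: measurableT_comp (measurable_indic mA) measurable_fst.
have mG : measurable_fun setT G.
  apply: measurable_funB => //; apply: measurable_funD => //.
  by apply: measurable_funB => //; apply: measurable_funM.
have ln0 : lambda != 0 by rewrite gt_eqF.
have G0 y : G (s1, y) = 0 /\ G (s2, y) = 0.
  rewrite /G Ps1 Ps2 /p1 /p2 !mulrA mulfV // !mul1r !indicE /=.
  rewrite (mem_set As1) (memNset As2) /= ?mulr1n ?mulr0n (_ : F (s1, y) = f1 y) //.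
  rewrite (_ : F (s2, y) = f2 y) //; split; lra.
have Gint t : Rintegral (mu t) setT (G \o L t) = 0.
  rewrite /Rintegral (@ae0_int _ _ _ _ _ (L t @^-1` [set z | G z != 0])) //.
  - rewrite -[X in measurable X]setTI; apply: (mL t) => //; exact: mnzR.
  - apply: cz; first exact: mnzR.
    move=> y; have [g1 g2] := G0 y; by rewrite /= g1 g2 eqxx; split.
  - by apply/measurable_EFinP; exact: measurableT_comp mG (mL t).
  - by move=> h /= /negP; rewrite negbK => /eqP ->.
have [Mx hMx] := buX; have [My hMy] := buY.
have bF : bnd F.
  apply: bndD; last exact: bndc.
  by apply: bndD; apply: bndZ; [exists Mx|exists My].
have bP : bnd P by exists 1 => z; have /andP[h0 h1] := P01 z; rewrite ger0_norm.
have bI : bnd (fun z : (SX * SY)%type => \1_A z.1 : R).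
  by exists 1 => z; rewrite indicE; case: (_ \in _); rewrite ?normr1 ?normr0.
have intg t (f : (SX * SY)%type -> R) : measurable_fun setT f -> bnd f ->
    (mu t).-integrable setT (EFin \o (fun h => f (L t h))).
  move=> mf bf; apply: bint; [exact: mfin|exact: measurableT_comp mf (mL t)|].
  exact: bndcomp.
pose RF t := Rintegral (mu t) setT (fun h => F (L t h)).
pose q t := fine (mu t (L t @^-1` (A `*` setT))).
have RIq t : Rintegral (mu t) setT (fun h => \1_A (L t h).1 : R) = q t.
  rewrite /Rintegral /q (eq_integral (fun h => (\1_(L t @^-1` (A `*` setT)) h)%:E)).
    rewrite integral_indic // ?setIT //.
    by rewrite -[X in measurable X]setTI; apply: (mL t) => //; apply: measurableX.
  move=> h _; rewrite !indicE; case: (boolP ((L t h).1 \in A)) => H.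
    by rewrite mem_set //; split => //; exact: set_mem H.
  by rewrite memNset //; case=> /mem_set; rewrite (negbTE H).
have RPq t : Rintegral (mu t) setT (fun h => P (L t h)) = q t.+1.
  rewrite /q.
  have -> : L t.+1 @^-1` (A `*` setT) = setT `*` (A `*` setT).
    by apply/seteqP; split => -[h z] /=; [move=> ?; split|case].
  rewrite hmuS //; last exact: measurableX.
  rewrite (eq_integral (fun h => (P (L t h))%:E)) //.
  by move=> h _; rewrite prodXT // ?prob_kernel.
have q0 : q 0%N = p0.
  rewrite /q; change (fine (mu 0%N (A `*` setT)) = p0).
  rewrite hmu0; last exact: measurableX.
  have -> : (sigX0 \x sigY0)%E (A `*` setT) = (sigX0 A * sigY0 setT)%E.
    exact: product_measure1E.
  rewrite hsigX0 // !diracE (mem_set As1) (memNset As2) probability_setT /=.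
  by rewrite !mulr1 mulr0 addr0.
have q01 t : 0 <= q t <= 1.
  have mm : measurable (L t @^-1` (A `*` setT)).
    by rewrite -[X in measurable X]setTI; apply: (mL t) => //; apply: measurableX.
  have h1 := @probability_le1 _ _ _ (mu t) _ mm.
  have h0 : (0 <= mu t (L t @^-1` (A `*` setT)))%E by [].
  rewrite /q; apply/andP; split; first exact: fine_ge0.
  rewrite -lee_fin fineK // ge0_fin_numE //.
  exact: (le_lt_trans h1 (ltry 1)).
have mF' : measurable_fun setT (fun z => phi * F z) by apply: measurable_funM.
have mP' : measurable_fun setT (fun z => lambda * P z) by apply: measurable_funM.
have bF' : bnd (fun z => phi * F z) by apply: bndZ.
have bP' : bnd (fun z => lambda * P z) by apply: bndZ.
have key t : phi * RF t - lambda * q t.+1 + q t - (1 - lambda) * p0 = 0.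
  rewrite -(RIq t) -(RPq t) -[RHS](Gint t).
  rewrite (_ : Rintegral (mu t) setT (G \o L t) = Rintegral (mu t) setT
     (fun h => (phi * F (L t h) - lambda * P (L t h) + \1_A (L t h).1)
               - (1 - lambda) * p0)) //.
  rewrite RintegralB //; first last.
  - exact: (intg t (fun=> (1 - lambda) * p0) (measurable_cst _) (bndc _ _ _)).
  - apply: (intg t (fun z => phi * F z - lambda * P z + \1_A z.1)).
      by apply: measurable_funD => //; apply: measurable_funB.
    by apply: bndD => //; apply: bndB.
  rewrite RintegralD //; first last.
  - exact: (intg t (fun z => \1_A z.1 : R)).
  - apply: (intg t (fun z => phi * F z - lambda * P z)).
      by apply: measurable_funB.
    by apply: bndB.
  rewrite RintegralB //; first last.
  - exact: (intg t (fun z => lambda * P z)).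
  - exact: (intg t (fun z => phi * F z)).
  rewrite RintegralZl //; last exact: (intg t F).
  rewrite RintegralZl //; last exact: (intg t P).
  have ft1 : fine (mu t setT) = 1 by rewrite probability_setT.
  by rewrite Rintegral_cst // ft1 mulr1.
pose a t := Rintegral (mu t) setT (fun h => uX (L t h)).
pose b t := Rintegral (mu t) setT (fun h => uY (L t h)).
have buX' : bnd uX by exists Mx.
have buY' : bnd uY by exists My.
have mX' : measurable_fun setT (fun z => alpha * uX z) by apply: measurable_funM.
have mY' : measurable_fun setT (fun z => beta * uY z) by apply: measurable_funM.
have RFab t : RF t = alpha * a t + beta * b t + gamma.
  rewrite /RF /F RintegralD //; first last.
  - exact: (intg t (fun=> gamma) (measurable_cst _) (bndc _ _ _)).
  - apply: (intg t (fun z => alpha * uX z + beta * uY z)).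
      exact: measurable_funD.
    by apply: bndD; apply: bndZ.
  rewrite RintegralD //; first last.
  - by apply: (intg t (fun z => beta * uY z)) => //; apply: bndZ.
  - by apply: (intg t (fun z => alpha * uX z)) => //; apply: bndZ.
  rewrite RintegralZl //; last exact: (intg t uX).
  rewrite RintegralZl //; last exact: (intg t uY).
  have ft1 : fine (mu t setT) = 1 by rewrite probability_setT.
  by rewrite Rintegral_cst // ft1 mulr1.
have pay (u : (SX * SY)%type -> R) : measurable_fun setT u -> bnd u ->
   payoff lambda (fun t => mu t) u =
   (1 - lambda) * limn (series (fun t => lambda ^+ t *
       Rintegral (mu t) setT (fun h => u (L t h)))).
  move=> mu' bu; rewrite /payoff; congr (_ * _); congr (limn _); congr series.
  apply/funext => t /=; congr (_ * _).
  rewrite /nu_of (integral_pushforward (mL t) _ _ measurableT).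
  - by rewrite preimage_setT.
  - by apply/measurable_EFinP.
  - by rewrite preimage_setT; exact: (intg t u).
have abnd (u : (SX * SY)%type -> R) M : measurable_fun setT u ->
    (forall z, `|u z| <= M) -> forall t,
    `|Rintegral (mu t) setT (fun h => u (L t h))| <= M.
  move=> mu' hM t.
  have bu : bnd u by exists M.
  have iu := intg t u mu' bu.
  apply: (le_trans (le_normr_Rintegral _ _)) => //.
  have mn : measurable_fun setT (fun z => `|u z|).
    exact: (measurableT_comp (@normr_measurable R setT) mu').
  have bn : bnd (fun z => `|u z|) by exists M => z; rewrite normr_id.
  apply: (@le_trans _ _ (Rintegral (mu t) setT (fun _ => M))).
    apply: le_Rintegral => //.
    - exact: (intg t (fun z => `|u z|)).
    - exact: (intg t (fun=> M) (measurable_cst _) (bndc _ _ _)).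
  have ft1 : fine (mu t setT) = 1 by rewrite probability_setT.
  by rewrite Rintegral_cst // ft1 mulr1.
have cvgs (u : (SX * SY)%type -> R) M : measurable_fun setT u ->
    (forall z, `|u z| <= M) ->
    cvgn (series (fun t => lambda ^+ t * Rintegral (mu t) setT (fun h => u (L t h)))).
  move=> mu' hM.
  have M0 : 0 <= M by apply: le_trans (normr_ge0 _) (hM (s1, y0)).
  apply: normed_cvg.
  apply: (@series_le_cvg _ _ (geometric M lambda)).
  - by move=> n; rewrite /=.
  - by move=> n; rewrite /geometric /=; apply: mulr_ge0 => //; apply: exprn_ge0; exact: ltW.
  - move=> n; rewrite /geometric /= normrM ger0_norm; last by apply: exprn_ge0; exact: ltW.
    rewrite mulrC; apply: ler_wpM2r; last exact: abnd.
    by apply: exprn_ge0; exact: ltW.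
  - by apply: is_cvg_geometric_series; rewrite ger0_norm ?ltW.
pose sa := series (fun t => lambda ^+ t * a t).
pose sb := series (fun t => lambda ^+ t * b t).
have s0 (u : R^nat) : series u 0%N = 0 by rewrite /series /= big_geq.
have cf n : (1 - lambda) * phi * (alpha * sa n + beta * sb n) =
    (1 - lambda) * (lambda ^+ n * (q n - p0)) - phi * gamma * (1 - lambda ^+ n).
  elim: n => [|n IH].
    by rewrite /sa /sb !s0 q0 expr0; ring.
  have E2 : phi * (alpha * a n + beta * b n) =
      lambda * q n.+1 - q n + (1 - lambda) * p0 - phi * gamma.
    by have := key n; rewrite RFab; lra.
  transitivity ((1 - lambda) * phi * (alpha * sa n + beta * sb n) +
    (1 - lambda) * lambda ^+ n * (phi * (alpha * a n + beta * b n))).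
    by rewrite /sa /sb !seriesSr; ring.
  by rewrite IH E2 exprS; ring.
have lam1 : `|lambda| < 1 by rewrite ger0_norm // ltW.
have hx : (fun n => lambda ^+ n) @ \oo --> 0 := cvg_expr lam1.
have hy : (fun n => lambda ^+ n * (q n - p0)) @ \oo --> 0.
  apply: (@squeeze_cvgr _ _ _ _ (fun n => - lambda ^+ n) (fun n => lambda ^+ n)).
  - apply: nearW => n.
    have := q01 n; move=> /andP[qa qb].
    have xn : 0 <= lambda ^+ n by apply: exprn_ge0; exact: ltW.
    by apply/andP; split; nra.
  - by rewrite -oppr0; apply: cvgN.
  - exact: hx.
have hl : (fun n => (1 - lambda) * (lambda ^+ n * (q n - p0)) -
    phi * gamma * (1 - lambda ^+ n)) @ \oo --> - (phi * gamma).
  have c1 : (fun _ : nat => 1 : R) @ \oo --> (1 : R) by apply: cvg_cst.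
  have H := cvgB (cvgM (cvg_cst (1 - lambda)) hy)
                 (cvgM (cvg_cst (phi * gamma)) (cvgB c1 hx)).
  rewrite (_ : - (phi * gamma) = (1 - lambda) * 0 - phi * gamma * (1 - 0)).
    exact: H.
  by ring.
have ha : sa @ \oo --> limn sa := cvgs uX Mx muX hMx.
have hb : sb @ \oo --> limn sb := cvgs uY My muY hMy.
have hc : (fun n => (1 - lambda) * phi * (alpha * sa n + beta * sb n)) @ \oo -->
    (1 - lambda) * phi * (alpha * limn sa + beta * limn sb).
  exact: cvgM (cvg_cst _) (cvgD (cvgM (cvg_cst _) ha) (cvgM (cvg_cst _) hb)).
have E : (1 - lambda) * phi * (alpha * limn sa + beta * limn sb) = - (phi * gamma).
  have ecf : (fun n => (1 - lambda) * phi * (alpha * sa n + beta * sb n)) =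
    (fun n => (1 - lambda) * (lambda ^+ n * (q n - p0)) -
      phi * gamma * (1 - lambda ^+ n)) := funext cf.
  rewrite ecf in hc.
  exact: (norm_cvg_unique hc hl).
rewrite (pay uX muX buX') (pay uY muY buY') -/sa -/sb.
have phi0 : phi != 0 by rewrite gt_eqF.
apply: (mulfI phi0); rewrite mulr0.
lra.
Qed.
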